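(* Let $\Lambda$ be a tree with distinguished root vertex $\lambda$, and let $r\ge 3$ be an integer. If $2\le\deg(\lambda)\le r-1$ and all other vertices of $\Lambda$ have degree at least $3$, then there is a perimeter $P$ of radius at most $r$ and a function $d:P\to\mathbb{N}^+$ satisfying $d(p)\le\deg(p)-1$ for all $p\in P$ and $\sum_{p\in P}d(p)=r$.
   Context: On the vertex set of a rooted tree $(\Lambda,\lambda)$ define the partial order $u\prec v$ iff the unique shortest path from $\lambda$ to $v$ passes through $u$. A finite set $P\subseteq V(\Lambda)$ is a perimeter if $P\ne\{\lambda\}$ and: (i) there is a constant $R$ such that every vertex $u$ with $d(u,\lambda)\ge R$ has some $p\in P$ with $p\prec u$; (ii) if $p,p'\in P$ and $p\prec p'$ then $p=p'$. The radius of $P$ is the smallest $R$ satisfying (i). Here $d$ denotes the path-length metric and $\mathbb{N}^+$ the positive integers. *)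

(* Defs.v *)
From Stdlib Require Import List Arith Lia.
Import ListNotations.

Section Graphs.
Context {V : Type} (adj : V -> V -> Prop).

Fixpoint walk (x : V) (l : list V) (y : V) : Prop :=
  match l with
  | nil => x = y
  | z :: l' => adj x z /\ walk z l' y
  end.

Definition is_tree : Prop :=
  (forall x y, adj x y -> adj y x) /\
  (forall x, ~ adj x x) /\
  (forall x y, exists l, walk x l y) /\
  (* no cycle: no closed walk x -> ... -> x of length >= 3 whose vertices
     (other than the repeated endpoint) are pairwise distinct *)
  (forall x l, walk x l x -> 3 <= length l -> ~ NoDup l).

Definition dist (x y : V) (n : nat) : Prop :=
  (exists l, walk x l y /\ length l = n) /\
  (forall l, walk x l y -> n <= length l).

Definition dist_ge (x y : V) (R : nat) : Prop :=
  forall n, dist x y n -> R <= n.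

(* u ≺ v : the (unique) shortest path from the root lam to v passes through u *)
Definition prec (lam u v : V) : Prop :=
  exists l n, walk lam l v /\ dist lam v n /\ length l = n /\ In u (lam :: l).

Definition deg_ge (v : V) (k : nat) : Prop :=
  exists l, NoDup l /\ (forall x, In x l -> adj v x) /\ length l = k.

Definition deg_le (v : V) (k : nat) : Prop :=
  forall l, NoDup l -> (forall x, In x l -> adj v x) -> length l <= k.

Definition perimeter_cond_i (lam : V) (P : list V) (R : nat) : Prop :=
  forall u, dist_ge u lam R -> exists p, In p P /\ prec lam p u.

Definition is_perimeter (lam : V) (P : list V) : Prop :=
  NoDup P /\
  ~ (forall x, In x P <-> x = lam) /\
  (exists R, perimeter_cond_i lam P R) /\
  (forall p p', In p P -> In p' P -> prec lam p p' -> p = p').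

(* P is a perimeter whose radius (least R satisfying (i)) is at most r *)
Definition perimeter_radius_le (lam : V) (P : list V) (r : nat) : Prop :=
  is_perimeter lam P /\ exists R, R <= r /\ perimeter_cond_i lam P R.

End Graphs.

(* Main.v *)
Require Import Defs.
From Stdlib Require Import List Arith Lia ListDec Classical ClassicalEpsilon.
Import ListNotations.

Section W.
Context {V : Type} (adj : V -> V -> Prop).

Lemma walk_app x l1 m l2 y : walk adj x l1 m -> walk adj m l2 y -> walk adj x (l1 ++ l2) y.
Proof. revert x; induction l1; simpl; intros x H1 H2. subst; auto. destruct H1; split; eauto. Qed.

Lemma walk_split x l1 l2 y : walk adj x (l1 ++ l2) y -> exists m, walk adj x l1 m /\ walk adj m l2 y.
Proof. revert x; induction l1; simpl; intros x H. exists x; auto.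
  destruct H as [H1 H2]; destruct (IHl1 _ H2) as [m [? ?]]; exists m; auto. Qed.

Lemma walk_nth d x l y i : walk adj x l y -> i <= length l ->
  walk adj x (firstn i l) (nth i (x::l) d) /\ walk adj (nth i (x::l) d) (skipn i l) y.
Proof.
  revert x i; induction l; intros x i H Hi.
  - simpl in *. assert (i=0) by lia. subst. simpl. auto.
  - destruct i. { simpl. split; auto. }
    simpl in H. destruct H as [H0 H]. simpl in Hi.
    destruct (IHl a i H ltac:(lia)) as [A B]. simpl. split; [split|]; auto.
Qed.

Context (sym : forall x y, adj x y -> adj y x).

Lemma walk_rev_ext x l y : walk adj x l y -> forall z, adj z y -> walk adj z (rev l ++ [x]) x.
Proof.
  revert x; induction l; simpl; intros x H z Hz.
  - subst. simpl. split; auto.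
  - destruct H as [Hxa Hw]. specialize (IHl a Hw z Hz).
    apply walk_app with a; auto. simpl.
    split; auto.
Qed.

Lemma walk_rev x l y : walk adj x l y -> exists l', walk adj y l' x /\ length l' = length l.
Proof.
  revert x; induction l; simpl; intros x H.
  - exists []; simpl; auto.
  - destruct H as [Hxa Hw]. destruct (IHl a Hw) as [l' [H1 H2]].
    exists (l' ++ [x]). split. apply walk_app with a; auto. simpl; auto.
    rewrite length_app; simpl; lia.
Qed.

Context (irr : forall x, ~ adj x x)
  (acyc : forall x l, walk adj x l x -> 3 <= length l -> ~ NoDup l).

Lemma deceq : decidable_eq V.
Proof. intros x y. destruct (excluded_middle_informative (x = y)); [left|right]; auto. Qed.

Lemma backtrack : forall n x l, length l <= n -> walk adj x l x -> 1 <= length l ->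
  exists pre y z post, x :: l = pre ++ y :: z :: y :: post.
Proof.
  induction n; intros x l Hn Hw H1. lia.
  destruct (classic (NoDup l)) as [Hnd|Hnd].
  - destruct l as [|a [|b [|c t]]]; simpl in *; try lia.
    + destruct Hw as [Ha Hb]; simpl in Hb; subst; exfalso; eapply irr; exact Ha.
    + destruct Hw as [_ [_ ->]]. exists [], x, a, []. reflexivity.
    + exfalso. apply (acyc x (a::b::c::t)); [exact Hw| simpl; lia | exact Hnd].
  - destruct (not_NoDup deceq Hnd) as [a [l1 [l2 [l3 El]]]]. subst l.
    destruct (walk_split _ _ _ _ Hw) as [m [_ Hm]]. simpl in Hm. destruct Hm as [_ Hm].
    destruct (walk_split _ _ _ _ Hm) as [m' [Hm1 Hm2]]. simpl in Hm2. destruct Hm2 as [Hm2 _].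
    assert (Hc : walk adj a (l2 ++ [a]) a) by (apply walk_app with m'; simpl; auto).
    rewrite !length_app in Hn. simpl in Hn. rewrite ?length_app in Hn. simpl in Hn.
    destruct (IHn a (l2 ++ [a])) as [pre [y [z [post E]]]]; [rewrite length_app; simpl; lia | exact Hc | rewrite length_app; simpl; lia |].

    exists (x :: l1 ++ pre), y, z, (post ++ l3).
    assert (E2 : x :: l1 ++ a :: l2 ++ a :: l3 = (x :: l1) ++ (a :: l2 ++ [a]) ++ l3).
    { simpl. rewrite <- !app_assoc. reflexivity. }
    rewrite E2, E. simpl. rewrite <- !app_assoc. reflexivity.
Qed.

Lemma backtrack_nth d x l : walk adj x l x -> 1 <= length l ->
  exists i, i + 2 < length (x :: l) /\ nth i (x::l) d = nth (i+2) (x::l) d.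
Proof.
  intros Hw H1. destruct (backtrack (length l) x l (le_n _) Hw H1) as [pre [y [z [post E]]]].
  rewrite E. exists (length pre). rewrite length_app. simpl. split. lia.
  rewrite !app_nth2 by lia. replace (length pre - length pre) with 0 by lia.
  replace (length pre + 2 - length pre) with 2 by lia. reflexivity.
Qed.

End W.

Section L.
Context {V : Type} (adj : V -> V -> Prop)
  (sym : forall x y, adj x y -> adj y x) (irr : forall x, ~ adj x x)
  (acyc : forall x l, walk adj x l x -> 3 <= length l -> ~ NoDup l)
  (lam : V) (lev : V -> nat) (Hlev : forall v, dist adj lam v (lev v)).

Lemma dist_unique x y n m : dist adj x y n -> dist adj x y m -> n = m.
Proof. intros [[l1 [H1 E1]] B1] [[l2 [H2 E2]] B2]. specialize (B1 _ H2). specialize (B2 _ H1). lia. Qed.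

Lemma lev_walk v l : walk adj lam l v -> lev v <= length l.
Proof. intros H. exact (proj2 (Hlev v) l H). Qed.

Lemma geo v : exists g, walk adj lam g v /\ length g = lev v.
Proof. exact (proj1 (Hlev v)). Qed.

Lemma lev_adj a b : adj a b -> lev b <= S (lev a).
Proof. intros H. destruct (geo a) as [g [Hg E]].
  assert (W : walk adj lam (g ++ [b]) b) by (apply walk_app with a; simpl; auto).
  apply lev_walk in W. rewrite length_app in W; simpl in W; lia. Qed.

Lemma geo_lev g v : walk adj lam g v -> length g = lev v -> forall i, i <= length g ->
  lev (nth i (lam::g) lam) = i.
Proof.
  intros Hw E i Hi. destruct (walk_nth adj lam lam g v i Hw Hi) as [W1 W2].
  apply Nat.le_antisymm.
  - apply lev_walk in W1. rewrite firstn_length_le in W1; lia.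
  - destruct (geo (nth i (lam::g) lam)) as [w [Hw' E']].
    assert (W := walk_app adj _ _ _ _ _ Hw' W2). apply lev_walk in W.
    rewrite length_app, length_skipn in W. lia.
Qed.

Lemma geo_last g v d : walk adj lam g v -> nth (length g) (lam::g) d = v.
Proof. intros Hw. destruct (walk_nth adj d lam g v (length g) Hw (le_n _)) as [_ W2].
  rewrite skipn_all in W2. exact W2. Qed.

Lemma lev_lam : lev lam = 0.
Proof. assert (H := lev_walk lam [] eq_refl). simpl in H; lia. Qed.

Lemma lev0 v : lev v = 0 -> v = lam.
Proof. intros H. destruct (geo v) as [g [Hg E]]. destruct g; simpl in *; [auto|lia]. Qed.

Lemma parent v : 1 <= lev v -> exists u, adj u v /\ lev u = lev v - 1.
Proof.
  intros H. destruct (geo v) as [g [Hg E]].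
  destruct (walk_nth adj lam lam g v (lev v - 1) Hg ltac:(lia)) as [_ W2].
  exists (nth (lev v - 1) (lam::g) lam). split.
  - assert (Hl : length (skipn (lev v - 1) g) = 1) by (rewrite length_skipn; lia).
    destruct (skipn (lev v - 1) g) as [|w [|w' t]]; simpl in Hl; try lia.
    simpl in W2. destruct W2 as [W2 ->]. exact W2.
  - apply (geo_lev g v Hg E); lia.
Qed.

Lemma profile ga gb a b : walk adj lam ga a -> length ga = lev a ->
  walk adj lam gb b -> length gb = lev b ->
  forall k, k < length ga + length gb + 2 ->
  lev (nth k ((lam::ga) ++ rev (lam::gb)) lam) =
    if k <=? length ga then k else length ga + length gb + 1 - k.
Proof.
  intros Ha Ea Hb Eb k Hk. destruct (Nat.leb_spec k (length ga)).
  - rewrite app_nth1 by (simpl; lia). apply (geo_lev ga a); auto.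
  - rewrite app_nth2 by (simpl; lia). rewrite rev_nth by (simpl length; simpl length in Hk; lia).
    simpl length. rewrite (geo_lev gb b); auto; lia.
Qed.

Lemma glue ga gb a b : walk adj lam ga a -> length ga = lev a ->
  walk adj lam gb b -> length gb = lev b -> adj a b ->
  exists i, i + 2 < length ga + length gb + 2 /\
    lev (nth i ((lam::ga) ++ rev (lam::gb)) lam) = lev (nth (i+2) ((lam::ga) ++ rev (lam::gb)) lam)
    /\ nth i ((lam::ga) ++ rev (lam::gb)) lam = nth (i+2) ((lam::ga) ++ rev (lam::gb)) lam.
Proof.
  intros Ha Ea Hb Eb Hab.
  assert (W : walk adj lam (ga ++ rev gb ++ [lam]) lam).
  { apply walk_app with a; auto. apply (walk_rev_ext adj sym lam gb b Hb a Hab). }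
  destruct (backtrack_nth adj irr acyc lam lam _ W) as [i [Hi E]].
  { rewrite !length_app; simpl; lia. }
  exists i. simpl in Hi. rewrite !length_app in Hi. simpl in Hi. rewrite length_rev in Hi.
  simpl. simpl in E. rewrite E. repeat split; auto. lia.
Qed.

Lemma noE a b : adj a b -> lev a = lev b -> False.
Proof.
  intros Hab E. destruct (geo a) as [ga [Ha Ea]]. destruct (geo b) as [gb [Hb Eb]].
  destruct (glue ga gb a b Ha Ea Hb Eb Hab) as [i [Hi [El _]]].
  rewrite !(profile ga gb a b Ha Ea Hb Eb) in El by lia.
  destruct (Nat.leb_spec i (length ga)); destruct (Nat.leb_spec (i+2) (length ga)); lia.
Qed.

Lemma uniqP a b q : adj a q -> adj b q -> lev a = lev b -> lev q = S (lev a) -> a = b.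
Proof.
  intros Haq Hbq E Eq. destruct (geo a) as [ga [Ha Ea]]. destruct (geo b) as [gb [Hb Eb]].
  assert (Hq : walk adj lam (ga ++ [q]) q) by (apply walk_app with a; simpl; auto).
  assert (Eq' : length (ga ++ [q]) = lev q) by (rewrite length_app; simpl; lia).
  destruct (glue (ga ++ [q]) gb q b Hq Eq' Hb Eb (sym _ _ Hbq)) as [i [Hi [El En]]].
  rewrite !(profile (ga ++ [q]) gb q b Hq Eq' Hb Eb) in El by lia.
  rewrite length_app in El, Hi. simpl in El, Hi.
  assert (i = length ga) by
    (destruct (Nat.leb_spec i (length ga + 1)); destruct (Nat.leb_spec (i+2) (length ga + 1)); lia).
  subst i. rewrite app_nth1 in En by (simpl; rewrite length_app; simpl; lia).
  replace (lam :: ga ++ [q]) with ((lam :: ga) ++ [q]) in En by reflexivity.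
  rewrite app_nth1 in En by (simpl; lia). rewrite (geo_last ga a lam Ha) in En.
  rewrite app_nth2 in En by (simpl; rewrite length_app; simpl; lia).
  rewrite rev_nth in En by (simpl; rewrite length_app; simpl; lia).
  rewrite En. simpl length. rewrite length_app. simpl length.
  replace (S (length gb) - S (length ga + 2 - (S (length ga + 1)))) with (length gb) by lia.
  apply (geo_last gb b lam Hb).
Qed.

End L.

Section C.
Context {V : Type}.

Lemma sum_ge_len (c : V -> nat) L : (forall p, In p L -> 1 <= c p) -> length L <= list_sum (map c L).
Proof. induction L; simpl; intros H; auto.
  assert (length L <= list_sum (map c L)) by (apply IHL; auto).
  specialize (H a (or_introl eq_refl)). lia. Qed.

Lemma in_le_sum (c : V -> nat) L p : In p L -> c p <= list_sum (map c L).
Proof. induction L; simpl; intros H; [contradiction|]. destruct H as [H|H]; [subst; lia|].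
  specialize (IHL H); lia. Qed.

Lemma comb (c : V -> nat) : forall L r, NoDup L -> (forall p, In p L -> 1 <= c p) ->
  length L <= r -> r <= list_sum (map c L) ->
  exists d : V -> nat, (forall p, In p L -> 1 <= d p <= c p) /\ list_sum (map d L) = r.
Proof.
  induction L; intros r Hnd Hc Hl Hs.
  - exists (fun _ => 0). simpl in *. split; [tauto|lia].
  - inversion Hnd; subst. simpl in Hl, Hs.
    assert (Ha := Hc a (or_introl eq_refl)).
    assert (HL := sum_ge_len c L (fun p Hp => Hc p (or_intror Hp))).
    set (m := Nat.min (c a) (r - length L)).
    destruct (IHL (r - m)) as [d' [Hd1 Hd2]]; auto.
    + intros p Hp; apply Hc; right; auto.
    + unfold m; lia.
    + unfold m; lia.
    + exists (fun y => if excluded_middle_informative (y = a) then m else d' y). split.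
      * intros p [Hp|Hp].
        -- subst. destruct (excluded_middle_informative (p = p)) as [_|n]; [unfold m; lia|congruence].
        -- destruct (excluded_middle_informative (p = a)) as [->|n]; [contradiction|]. apply Hd1; auto.
      * simpl. destruct (excluded_middle_informative (a = a)) as [_|n]; [|congruence].
        rewrite (map_ext_in _ d' L). rewrite Hd2. unfold m; lia.
        intros y Hy. destruct (excluded_middle_informative (y = a)) as [->|n]; [contradiction|auto].
Qed.

Lemma filter_lt (f : V -> bool) l u : In u l -> f u = false -> length (filter f l) < length l.
Proof. induction l; simpl; intros H Hf; [contradiction|]. destruct H as [->|H].
  - rewrite Hf. assert (Hh := filter_length_le f l). lia.
  - specialize (IHl H Hf). destruct (f a); simpl; lia. Qed.

Lemma len_le1 (l : list V) : NoDup l -> (forall x y, In x l -> In y l -> x = y) -> length l <= 1.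
Proof. intros Hnd H. destruct l as [|a [|b t]]; simpl; try lia.
  inversion Hnd; subst. exfalso. apply H2. rewrite (H a b); simpl; auto. Qed.

Lemma deg_ge_mono (adj : V -> V -> Prop) v k m : deg_ge adj v k -> m <= k -> deg_ge adj v m.
Proof. intros [l [Hnd [Ha Hl]]] Hm. exists (firstn m l). split; [|split].
  - rewrite <- (firstn_skipn m l) in Hnd. apply NoDup_app_remove_r in Hnd; exact Hnd.
  - intros x Hx. apply Ha. rewrite <- (firstn_skipn m l). apply in_or_app; auto.
  - rewrite firstn_length_le; lia.
Qed.

End C.

Section D.
Context {V : Type} (adj : V -> V -> Prop)
  (sym : forall x y, adj x y -> adj y x) (irr : forall x, ~ adj x x)
  (acyc : forall x l, walk adj x l x -> 3 <= length l -> ~ NoDup l)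
  (lam : V) (lev : V -> nat) (Hlev : forall v, dist adj lam v (lev v)).

Lemma children j p Np c : 1 <= j -> lev p = j -> NoDup Np -> (forall x, In x Np <-> adj p x) ->
  length Np = S c -> 2 <= c ->
  NoDup (filter (fun y => lev y =? S j) Np) /\
  (forall y, In y (filter (fun y => lev y =? S j) Np) <-> lev y = S j /\ adj p y) /\
  2 <= length (filter (fun y => lev y =? S j) Np) /\
  length (filter (fun y => lev y =? S j) Np) <= c.
Proof.
  intros Hj Hp Hnd HN Hl Hc. split; [|split; [|split]].
  - apply NoDup_filter; auto.
  - intros y. rewrite filter_In, Nat.eqb_eq, HN. tauto.
  - assert (HF := filter_length (fun y => lev y =? S j) Np).
    assert (length (filter (fun x => negb (lev x =? S j)) Np) <= 1); [|lia].
    apply len_le1. apply NoDup_filter; auto.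
    assert (K : forall y, In y (filter (fun x => negb (lev x =? S j)) Np) -> adj y p /\ lev y = j - 1).
    { intros y Hy. rewrite filter_In, HN in Hy. destruct Hy as [Hy Hb].
      apply Bool.negb_true_iff, Nat.eqb_neq in Hb.
      assert (H1 := lev_adj adj lam lev Hlev p y Hy).
      assert (H2 := lev_adj adj lam lev Hlev y p (sym _ _ Hy)).
      assert (lev y <> j) by (intro E; apply (noE adj sym irr acyc lam lev Hlev p y Hy); lia).
      split; [apply sym; auto | lia]. }
    intros x y Hx Hy. apply K in Hx, Hy. destruct Hx, Hy.
    apply (uniqP adj sym irr acyc lam lev Hlev x y p); auto; lia.
  - destruct (parent adj lam lev Hlev p ltac:(lia)) as [u [Hu Eu]].
    assert (In u Np) by (apply HN; apply sym; auto).
    assert (HL := filter_lt (fun y => lev y =? S j) Np u H).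
    simpl in HL. rewrite (proj2 (Nat.eqb_neq (lev u) (S j))) in HL by lia. specialize (HL eq_refl). lia.
Qed.

Lemma build (cap : V -> nat) j (Hj : 1 <= j) : forall L, NoDup L -> (forall p, In p L -> lev p = j) ->
  (forall p, In p L -> 2 <= cap p /\ exists Np, NoDup Np /\ (forall x, In x Np <-> adj p x) /\ length Np = S (cap p)) ->
  exists L', NoDup L' /\ (forall y, In y L' <-> lev y = S j /\ exists p, In p L /\ adj p y) /\
    2 * length L <= length L' /\ length L' <= list_sum (map cap L).
Proof.
  induction L as [|p L IH]; intros Hnd HL HN.
  - exists []. simpl. split; [constructor|]. split; [|lia]. intros y; split; [tauto|]. intros [_ [? [[] _]]].
  - inversion Hnd; subst.
    destruct IH as [L' [G1 [G2 [G3 G4]]]]; auto.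
    { intros q Hq; apply HL; right; auto. }
    { intros q Hq; apply HN; right; auto. }
    destruct (HN p (or_introl eq_refl)) as [Hc [Np [Hn1 [Hn2 Hn3]]]].
    destruct (children j p Np (cap p) Hj (HL p (or_introl eq_refl)) Hn1 Hn2 Hn3 Hc) as [C1 [C2 [C3 C4]]].
    exists (filter (fun y => lev y =? S j) Np ++ L'). split; [|split].
    + apply NoDup_app; auto. intros y Hy Hy'. apply C2 in Hy. apply G2 in Hy'.
      destruct Hy as [Ey Ay]. destruct Hy' as [_ [p' [Hp' Ap']]].
      assert (p = p'). { apply (uniqP adj sym irr acyc lam lev Hlev p p' y); auto.
        rewrite (HL p), (HL p'); simpl; auto. rewrite (HL p); simpl; auto. }
      subst; contradiction.
    + intros y. rewrite in_app_iff, C2, G2. split.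
      * intros [[E A]|[E [q [Hq A]]]]; split; auto. exists p; simpl; auto. exists q; simpl; auto.
      * intros [E [q [[<-|Hq] A]]]; [left|right]; auto. split; auto. exists q; auto.
    + simpl. rewrite length_app. lia.
Qed.

End D.

Lemma final {V : Type} (adj : V -> V -> Prop)
  (sym : forall x y, adj x y -> adj y x) (lam : V) (lev : V -> nat)
  (Hlev : forall v, dist adj lam v (lev v)) r j L :
  1 <= j -> j <= r -> NoDup L -> (forall x, In x L <-> lev x = j) -> perimeter_radius_le adj lam L r.
Proof.
  intros Hj Hjr Hnd HL.
  assert (CI : perimeter_cond_i adj lam L j).
  { intros u Hu. unfold dist_ge in Hu.
    assert (Du : dist adj u lam (lev u)).
    { split.
      - destruct (geo adj lam lev Hlev u) as [g [Hg Eg]].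
        destruct (walk_rev adj sym _ _ _ Hg) as [l' [W El]]. exists l'; split; auto; lia.
      - intros l W. destruct (walk_rev adj sym _ _ _ W) as [l' [W' E']]. rewrite <- E'.
        apply (lev_walk adj lam lev Hlev); auto. }
    apply Hu in Du. destruct (geo adj lam lev Hlev u) as [g [Hg Eg]].
    exists (nth j (lam::g) lam). split.
    - apply HL. apply (geo_lev adj lam lev Hlev g u Hg Eg); lia.
    - exists g, (lev u). split; [exact Hg|split; [apply Hlev|split; [exact Eg|]]]. apply nth_In. simpl; lia. }
  split; [split; [|split; [|split]] |].
  - exact Hnd.
  - intros H. assert (H0 : In lam L) by (apply H; auto). apply HL in H0.
    rewrite (lev_lam adj lam lev Hlev) in H0. lia.
  - exists j; auto.
  - intros p p' Hp Hp' [l [n [Hw [Hd [Hlen Hin]]]]].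
    assert (En : n = lev p') by (eapply dist_unique; eauto).
    destruct (In_nth _ _ lam Hin) as [i [Hi Ei]].
    apply HL in Hp, Hp'.
    assert (Gi := geo_lev adj lam lev Hlev l p' Hw ltac:(lia) i ltac:(simpl in Hi; lia)).
    rewrite Ei in Gi. replace i with (length l) in Ei by lia.
    rewrite (geo_last adj lam l p' lam Hw) in Ei. auto.
  - exists j; split; auto.
Qed.

Lemma nat_min (P : nat -> Prop) : (exists n, P n) -> exists n, P n /\ forall m, P m -> n <= m.
Proof.
  intros [n Hn]. induction n as [n IH] using lt_wf_ind.
  destruct (classic (exists m, m < n /\ P m)) as [[m [Hm Pm]]|Hno].
  - exact (IH m Hm Pm).
  - exists n; split; auto. intros m Pm. destruct (le_lt_dec n m); auto. exfalso; eauto.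
Qed.

Lemma bmax (P : nat -> Prop) K : P 0 -> exists k, k <= K /\ P k /\ forall k', k' <= K -> P k' -> k' <= k.
Proof.
  intros H0. induction K.
  - exists 0. split; [lia|split; [auto|intros; lia]].
  - destruct (classic (P (S K))) as [HS|HS].
    + exists (S K). split; [lia|split; auto].
    + destruct IHK as [k [Hk [Pk M]]]. exists k. repeat split; auto.
      intros k' Hk' Pk'. destruct (Nat.eq_dec k' (S K)); [subst; contradiction|]. apply M; auto; lia.
Qed.

Theorem lemma5p4 (V : Type) (adj : V -> V -> Prop) (lam : V) (r : nat) :
  is_tree adj ->
  3 <= r ->
  deg_ge adj lam 2 -> deg_le adj lam (r - 1) ->
  (forall v, v <> lam -> deg_ge adj v 3) ->
  exists (P : list V) (d : V -> nat),
    perimeter_radius_le adj lam P r /\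
    (forall p, In p P -> 1 <= d p /\ deg_ge adj p (d p + 1)) /\
    list_sum (map d P) = r.
Proof.
  intros [sym [irr [conn acyc]]] Hr Hd2 HdL Hdeg.
  assert (Hex : forall v, exists n, dist adj lam v n).
  { intros v. destruct (nat_min (fun n => exists l, walk adj lam l v /\ length l = n)) as [n [[l [Hl El]] Hm]].
    { destruct (conn lam v) as [l Hl]. exists (length l), l; auto. }
    exists n. split. exists l; auto. intros l' Hl'. apply Hm. exists l'; auto. }
  destruct (constructive_indefinite_description (fun f : V -> nat => forall v, dist adj lam v (f v)))
    as [lev Hlev].
  { exists (fun v => proj1_sig (constructive_indefinite_description _ (Hex v))).
    intros v. exact (proj2_sig (constructive_indefinite_description _ (Hex v))). }
  assert (Hcap : forall v, exists c, c <= r /\ (v <> lam -> 2 <= c /\ deg_ge adj v (c + 1)) /\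
     forall c', c' <= r -> deg_ge adj v (c' + 1) -> c' <= c).
  { intros v. destruct (bmax (fun c => c = 0 \/ deg_ge adj v (c + 1)) r (or_introl eq_refl))
      as [k [Hk [Pk M]]].
    exists k. split; [auto|split].
    - intros Hv. assert (2 <= k) by (apply M; [lia|right; apply Hdeg; auto]).
      split; auto. destruct Pk; [lia|auto].
    - intros c' Hc' Dc'. apply M; auto. }
  destruct (constructive_indefinite_description (fun f : V -> nat => forall v, f v <= r /\
     (v <> lam -> 2 <= f v /\ deg_ge adj v (f v + 1)) /\
     forall c', c' <= r -> deg_ge adj v (c' + 1) -> c' <= f v)) as [cap Hc].
  { exists (fun v => proj1_sig (constructive_indefinite_description _ (Hcap v))).
    intros v. exact (proj2_sig (constructive_indefinite_description _ (Hcap v))). }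
  assert (LOOP : forall m j L, r - length L <= m -> 1 <= j -> NoDup L ->
    (forall x, In x L <-> lev x = j) -> S j <= length L -> length L <= r - 1 ->
    exists (P : list V) (d : V -> nat),
    perimeter_radius_le adj lam P r /\
    (forall p, In p P -> 1 <= d p /\ deg_ge adj p (d p + 1)) /\
    list_sum (map d P) = r).
  { induction m; intros j L Hm Hj Hnd HL Hlen Hlr; [lia|].
    assert (Hnl : forall p, In p L -> p <> lam).
    { intros p Hp E. subst. apply HL in Hp. rewrite (lev_lam adj lam lev Hlev) in Hp. lia. }
    destruct (le_lt_dec r (list_sum (map cap L))) as [Hs|Hs].
    - destruct (comb cap L r Hnd) as [d [Hd1 Hs2]]; auto; try lia.
      { intros p Hp. destruct (Hc p) as [_ [H _]]. destruct (H (Hnl p Hp)); lia. }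
      exists L, d. split; [|split; auto].
      + apply (final adj sym lam lev Hlev r j L); auto. lia.
      + intros p Hp. split. apply Hd1; auto.
        destruct (Hc p) as [_ [H _]]. destruct (H (Hnl p Hp)) as [_ D].
        apply (deg_ge_mono adj p (cap p + 1)); auto. specialize (Hd1 p Hp). lia.
    - destruct (build adj sym irr acyc lam lev Hlev cap j Hj L Hnd) as [L' [G1 [G2 [G3 G4]]]].
      { intros p Hp; apply HL; auto. }
      { intros p Hp. destruct (Hc p) as [_ [H M]]. destruct (H (Hnl p Hp)) as [H2 [l [Hl1 [Hl2 Hl3]]]].
        split; auto. exists l. split; [auto|split; [|lia]].
        intros x; split; [apply Hl2|]. intros Ax. apply NNPP. intros Nx.
        assert (cap p + 1 <= cap p); [|lia].
        apply M. assert (cap p <= list_sum (map cap L)) by (apply in_le_sum; auto). lia.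
        exists (x :: l). split; [constructor; auto|split].
        - intros y [<-|Hy]; auto.
        - simpl; lia. }
      apply (IHm (S j) L'); auto; try lia.
      intros y. rewrite G2. split; [tauto|]. intros Ey. split; auto.
      destruct (parent adj lam lev Hlev y ltac:(lia)) as [u [Au Eu]].
      exists u. split; auto. apply HL. lia. }
  destruct (bmax (fun k => deg_ge adj lam k) (r - 1)) as [k [Hk [[l0 [N0 [A0 E0]]] M0]]].
  { exists []. split; [constructor|split; [intros x []|reflexivity]]. }
  assert (Hall : forall x, adj lam x -> In x l0).
  { intros x Ax. apply NNPP. intros Nx.
    assert (S k <= k); [|lia].
    assert (D : deg_ge adj lam (S k)).
    { exists (x :: l0). split; [constructor; auto|split].
      - intros y [<-|Hy]; auto.
      - simpl; lia. }
    apply M0; auto. destruct D as [l1 [D1 [D2 D3]]]. rewrite <- D3. apply HdL; auto. }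
  assert (2 <= k) by (apply M0; auto; lia).
  apply (LOOP r 1 l0); auto; try lia.
  intros x. split.
  - intros Hx. apply A0 in Hx.
    assert (lev x <= 1) by (apply (lev_walk adj lam lev Hlev x [x]); simpl; auto).
    assert (lev x <> 0). { intros E. apply (lev0 adj lam lev Hlev) in E. subst. eapply irr; eauto. }
    lia.
  - intros Ex. destruct (parent adj lam lev Hlev x ltac:(lia)) as [u [Au Eu]].
    rewrite Ex in Eu. simpl in Eu. apply (lev0 adj lam lev Hlev) in Eu. subst. auto.
Qed.
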